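(* Let $\mathscr X\subset\mathbb R^d$ be compact, $\|\cdot\|$ a norm, and $\mathscr X_N\subset\mathscr X$ a finite set of $N$ candidate points. Let $\mathbf x_1\in\mathscr X_N$ and, for $n\ge1$, let $\mathbf x_{n+1}$ be any point of $\mathrm{Arg}\max_{\mathbf x\in\mathscr X_N}\min_{1\le i\le n}\|\mathbf x-\mathbf x_i\|$, with $\mathbf X_n=\{\mathbf x_1,\ldots,\mathbf x_n\}$. Set $\alpha_n=1-\mathsf{CR}_{\mathscr X}(\mathscr X_N)/\mathsf{CR}_{\mathscr X}(\mathbf X_n)$. Then, for $n<N$ (with the bounds below read as trivial when $\alpha_n=0$), $$\mathsf{CR}_{\mathscr X}(\mathbf X_n)\le(2/\alpha_n)\,\mathsf{CR}_n^*\ \ (n\ge1),\qquad\mathsf{SR}(\mathbf X_n)\ge(\alpha_n/2)\,\mathsf{SR}_n^*\ \ (n\ge2),\qquad\mathsf{MR}_{\mathscr X}(\mathbf X_n)\le 2/\alpha_n\ \ (n\ge2).$$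
   Context: For a set $\mathscr Y$ and a finite point set $\mathbf Z$, $\mathsf{CR}_{\mathscr Y}(\mathbf Z)=\sup_{\mathbf y\in\mathscr Y}\min_{\mathbf z\in\mathbf Z}\|\mathbf y-\mathbf z\|$. Separation radius $\mathsf{SR}(\mathbf X_n)=\tfrac12\min_{i\ne j}\|\mathbf x_i-\mathbf x_j\|$; mesh-ratio $\mathsf{MR}_{\mathscr X}(\mathbf X_n)=\mathsf{CR}_{\mathscr X}(\mathbf X_n)/\mathsf{SR}(\mathbf X_n)$. $\mathsf{CR}_n^*$ is the minimum of $\mathsf{CR}_{\mathscr X}$ and $\mathsf{SR}_n^*$ the maximum of $\mathsf{SR}$ over all $n$-point designs of distinct points in $\mathscr X$. *)

(* Defs.v *)
From HB Require Import structures.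
From mathcomp Require Import all_boot all_order all_algebra.
From mathcomp Require Import all_classical all_reals all_analysis.
Set Implicit Arguments. Unset Strict Implicit. Unset Printing Implicit Defensive.
Import Order.TTheory GRing.Theory Num.Theory.
Import numFieldNormedType.Exports.
Local Open Scope classical_set_scope.
Local Open Scope ring_scope.

Section Defs.
Variables (R : realType) (d : nat).
Local Notation V := 'rV[R]_d.

Definition is_norm (nrm : V -> R) : Prop :=
  [/\ forall x y, nrm (x + y) <= nrm x + nrm y,
      forall (a : R) x, nrm (a *: x) = `|a| * nrm x &
      forall x, nrm x = 0 -> x = 0].

Definition mindist (nrm : V -> R) (y : V) (Z : set V) : R :=
  inf [set nrm (y - z) | z in Z].

Definition CR (nrm : V -> R) (X Z : set V) : R :=
  sup [set mindist nrm y Z | y in X].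

Definition SR (nrm : V -> R) (Z : set V) : R :=
  inf [set r | exists a b, [/\ Z a, Z b, a <> b & r = nrm (a - b)]] / 2.

Definition MR (nrm : V -> R) (X Z : set V) : R := CR nrm X Z / SR nrm Z.

Definition designs (X : set V) (n : nat) : set (set V) :=
  [set range f | f in [set f : 'I_n -> V | injective f /\ forall i, X (f i)]].

Definition CRstar (nrm : V -> R) (X : set V) (n : nat) : R :=
  inf [set CR nrm X Z | Z in designs X n].

Definition SRstar (nrm : V -> R) (X : set V) (n : nat) : R :=
  sup [set SR nrm Z | Z in designs X n].

Definition firstpts (x : nat -> V) (n : nat) : set V :=
  [set y | exists2 i, (1 <= i <= n)%N & y = x i].

Definition greedy (nrm : V -> R) (XN : seq V) (x : nat -> V) : Prop :=
  x 1%N \in XN /\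
  forall k, (1 <= k)%N ->
    x k.+1 \in XN /\
    forall y, y \in XN ->
      mindist nrm y (firstpts x k) <= mindist nrm (x k.+1) (firstpts x k).

End Defs.

(* Main.v *)
Require Import Defs.
From HB Require Import structures.
From mathcomp Require Import all_boot all_order all_algebra.
From mathcomp Require Import all_classical all_reals all_analysis.
From mathcomp Require Import zify ring lra.
Import Order.TTheory GRing.Theory Num.Theory.
Import numFieldNormedType.Exports.
Local Open Scope classical_set_scope.
Local Open Scope ring_scope.
Set Implicit Arguments. Unset Strict Implicit. Unset Printing Implicit Defensive.

Section H.
Variables (R : realType) (d : nat) (nrm : 'rV[R]_d -> R).
Hypothesis Hn : is_norm nrm.
Local Notation V := 'rV[R]_d.

Lemma nrmZ a v : nrm (a *: v) = `|a| * nrm v.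
Proof. by case: Hn. Qed.
Lemma nrmD u v : nrm (u + v) <= nrm u + nrm v.
Proof. by case: Hn. Qed.
Lemma nrm0 : nrm 0 = 0.
Proof. by rewrite -(scale0r (0 : V)) nrmZ normr0 mul0r. Qed.
Lemma nrmN v : nrm (- v) = nrm v.
Proof. by rewrite -scaleN1r nrmZ normrN1 mul1r. Qed.
Lemma nrm_ge0 v : 0 <= nrm v.
Proof.
have := nrmD v (- v); rewrite subrr nrm0 nrmN => h.
by rewrite -(@pmulr_rge0 _ 2) // mulr2n mulrDl !mul1r.
Qed.
Lemma nrmB u v : nrm (u - v) = nrm (v - u).
Proof. by rewrite -opprB nrmN. Qed.
Lemma nrm_gt0 v : v != 0 -> 0 < nrm v.
Proof.
move=> v0; rewrite lt0r nrm_ge0 andbT; apply/eqP => h.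
by case: Hn => _ _ /(_ v h) /eqP; rewrite (negbTE v0).
Qed.
Lemma nrm_tri a b c : nrm (a - c) <= nrm (a - b) + nrm (b - c).
Proof. have -> : a - c = (a - b) + (b - c) by rewrite addrA subrK. exact: nrmD. Qed.

Lemma nrm_sum (I : Type) (r : seq I) (F : I -> V) :
  nrm (\sum_(j <- r) F j) <= \sum_(j <- r) nrm (F j).
Proof.
elim: r => [|a r IH]; first by rewrite !big_nil nrm0.
rewrite !big_cons; apply: le_trans (nrmD _ _) _; exact: lerD.
Qed.

Lemma nrm_le_mx (u : V) : nrm u <= `|u| * \sum_(j < d) nrm (delta_mx 0 j).
Proof.
rewrite {1}(row_sum_delta u).
apply: le_trans (nrm_sum _ _) _.

rewrite mulr_sumr; apply: ler_sum => j _; rewrite nrmZ.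
apply: ler_wpM2r; first exact: nrm_ge0.
have -> : `|u| = mx_norm u by []. rewrite mx_normrE.
exact: (le_bigmax _ (fun ij : 'I_1 * 'I_d => `|u ij.1 ij.2|) (0, j)).
Qed.


Lemma exists_min (T : eqType) (f : T -> R) (s : seq T) : s != [::] ->
  exists2 z, z \in s & forall w, w \in s -> f z <= f w.
Proof.
elim: s => [//|a s IH] _.
case: (altP (s =P [::])) => [->|s0].
  by exists a; rewrite ?mem_head // => w; rewrite inE => /eqP ->.
have [z zs zmin] := IH s0.
case: (leP (f a) (f z)) => h.
  exists a; first exact: mem_head.
  move=> w; rewrite inE => /orP [/eqP ->//|/zmin]; exact: le_trans.
exists z; first by rewrite inE zs orbT.
move=> w; rewrite inE => /orP [/eqP ->|/zmin//]; exact: ltW.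
Qed.

Lemma mindist_lb y (s : seq V) w : w \in s -> mindist nrm y [set` s] <= nrm (y - w).
Proof.
move=> ws; rewrite /mindist; apply: ge_inf; last by exists w.
by exists 0 => r [z _ <-]; exact: nrm_ge0.
Qed.

Lemma mindist_att y (s : seq V) : s != [::] ->
  exists2 z, z \in s & mindist nrm y [set` s] = nrm (y - z).
Proof.
move=> s0; have [z zs zmin] := @exists_min _ (fun z => nrm (y - z)) s s0.
exists z => //; apply/le_anti; rewrite mindist_lb //=.
apply: lb_le_inf; first by exists (nrm (y - z)), z.
by move=> r [w ws <-]; exact: zmin.
Qed.

Lemma mindist_ge0 y (s : seq V) : s != [::] -> 0 <= mindist nrm y [set` s].
Proof. by move=> /(mindist_att y) [z _ ->]; exact: nrm_ge0. Qed.

Lemma mindist_mono y (s s' : seq V) : s != [::] -> {subset s <= s'} ->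
  mindist nrm y [set` s'] <= mindist nrm y [set` s].
Proof. by move=> /(mindist_att y) [z zs ->] ss; apply: mindist_lb; exact: ss. Qed.

Lemma CR_ub (X : set V) (s : seq V) y : compact X -> s != [::] -> X y ->
  mindist nrm y [set` s] <= CR nrm X [set` s].
Proof.
move=> cX s0 Xy; rewrite /CR; apply: ub_le_sup; last by exists y.
have [M [_ HM]] := compact_bounded cX.
have HB : forall z, X z -> `|z| <= M + 1 by apply: HM; rewrite ltrDl.
case: s s0 => [//|w0 s] _.
set K := \sum_(j < d) nrm (delta_mx 0 j).
have K0 : 0 <= K by apply: sumr_ge0 => j _; exact: nrm_ge0.
exists ((M + 1) * K + nrm w0) => r [z Xz <-].
apply: le_trans (mindist_lb z (mem_head w0 s)) _.
apply: le_trans (nrmD _ _) _; rewrite nrmN lerD2r.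
apply: le_trans (nrm_le_mx z) _; apply: ler_wpM2r => //; exact: HB.
Qed.

Lemma CR_le (X Z : set V) b : X !=set0 -> (forall y, X y -> mindist nrm y Z <= b) ->
  CR nrm X Z <= b.
Proof. by move=> X0 H; apply: ge_sup; [case: X0 => y Xy; exists (mindist nrm y Z), y | move=> r [y Xy <-]; exact: H]. Qed.

End H.


Lemma iota_bd i k : i \in iota 1 k -> (1 <= i <= k)%N.
Proof. rewrite mem_iota; lia. Qed.

Section G.
Variables (R : realType) (d : nat) (nrm : 'rV[R]_d -> R).
Hypothesis Hn : is_norm nrm.
Local Notation V := 'rV[R]_d.
Variables (X : set V) (XN : seq V) (x : nat -> V).
Hypothesis cX : compact X.
Hypothesis HX : forall z, z \in XN -> X z.
Hypothesis g : greedy nrm XN x.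

Definition pts k := map x (iota 1 k).
Definition hh k := mindist nrm (x k.+1) [set` pts k].

Lemma mem_pts k i : (1 <= i <= k)%N -> x i \in pts k.
Proof. by move=> Hi; apply/mapP; exists i => //; rewrite mem_iota; lia. Qed.

Lemma firstptsE k : firstpts x k = [set` pts k].
Proof.
apply/seteqP; split => y /=.
  by move=> [i Hi ->]; exact: mem_pts.
by move=> /mapP [i Hi ->]; exists i => //; move: Hi; rewrite mem_iota; lia.
Qed.

Lemma xXN k : (1 <= k)%N -> x k \in XN.
Proof.
case: k => [//|[|k]] _; first by case: g.
by case: g => _ /(_ k.+1 isT) [].
Qed.

Lemma ptsXN k : {subset pts k <= XN}.
Proof. by move=> y /mapP [i Hi ->]; apply: xXN; move: Hi; rewrite mem_iota; lia. Qed.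

Lemma pts0 k : (1 <= k)%N -> pts k != [::].
Proof. by case: k. Qed.

Lemma greedy_le k y : (1 <= k)%N -> y \in XN -> mindist nrm y [set` pts k] <= hh k.
Proof. by move=> Hk yX; rewrite /hh -firstptsE; case: g => _ /(_ k Hk) [_]; apply. Qed.

Lemma pts_sub k k' : (k <= k')%N -> {subset pts k <= pts k'}.
Proof. by move=> Hk y /mapP [i Hi ->]; apply: mem_pts; move: Hi; rewrite mem_iota; lia. Qed.

Lemma h_mono k m : (1 <= k)%N -> (k <= m)%N -> hh m <= hh k.
Proof.
move=> Hk; elim: m => [|m IH] Hkm; first by lia.
case: (ltngtP k m.+1) => [Hlt|Hlt|->]; last exact: lexx; last by lia.
apply: le_trans (IH _) ; last by lia.
rewrite /hh; apply: le_trans (mindist_mono Hn (x m.+2) (pts0 (k:=m) _) (pts_sub (k:=m) (k':=m.+1) _)) _; [lia|lia|].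
apply: greedy_le; [lia | apply: xXN; lia].
Qed.


Lemma pair_sep m i j : (1 <= m)%N -> (1 <= i <= m.+1)%N -> (1 <= j <= m.+1)%N ->
  i != j -> hh m <= nrm (x i - x j).
Proof.
move=> Hm Hi Hj ij.
suff H : forall i j, (1 <= i)%N -> (i < j)%N -> (j <= m.+1)%N -> hh m <= nrm (x j - x i).
  case: (ltngtP i j) => [h|h|h]; last by rewrite h eqxx in ij.
  - by rewrite nrmB //; apply: H; lia.
  - by apply: H; lia.
move=> a [//|b] Ha Hab Hb.
apply: le_trans (h_mono (k:=b) _ _) _; [lia|lia|].
by apply: (mindist_lb Hn); apply: mem_pts; lia.
Qed.

Lemma X0 : X !=set0.
Proof. by exists (x 1); apply: HX; apply: xXN. Qed.

Lemma XN0 : XN != [::].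
Proof. by have := xXN (k:=1) isT; case: XN. Qed.

Lemma CR_step k : (1 <= k)%N ->
  CR nrm X [set` pts k] <= CR nrm X [set` XN] + hh k.
Proof.
move=> Hk; apply: CR_le X0 _ => y Xy.
have [z zX Ez] := mindist_att Hn y XN0.
have [w wp Ew] := mindist_att Hn z (pts0 Hk).
apply: le_trans (mindist_lb Hn y wp) _.
apply: le_trans (nrm_tri Hn y z w) _.
apply: lerD.
  by rewrite -Ez; apply: CR_ub => //; exact: XN0.
by rewrite -Ew; apply: greedy_le.
Qed.

End G.

Unset Implicit Arguments. Set Strict Implicit. Set Printing Implicit Defensive.

Theorem theorem6 (R : realType) (d : nat) (nrm : 'rV[R]_d -> R)
    (X : set 'rV[R]_d) (XN : seq 'rV[R]_d) (N : nat)
    (x : nat -> 'rV[R]_d) (n : nat) :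
  is_norm nrm ->
  compact X ->
  uniq XN -> size XN = N -> (forall z, z \in XN -> X z) ->
  greedy nrm XN x ->
  (n < N)%N ->
  let Xn := firstpts x n in
  let alpha := 1 - CR nrm X [set` XN] / CR nrm X Xn in
  0 < alpha ->
  [/\ (1 <= n)%N -> CR nrm X Xn <= (2 / alpha) * CRstar nrm X n,
      (2 <= n)%N -> (alpha / 2) * SRstar nrm X n <= SR nrm Xn &
      (2 <= n)%N -> MR nrm X Xn <= 2 / alpha].
Proof.
move=> Hn cX uXN sXN HX g nN; cbv zeta; rewrite firstptsE.
set c := CR nrm X [set` pts x n]; set e := CR nrm X [set` XN].
set a := 1 - e / c => a0.
have XN0 := XN0 g.
have e0 : 0 <= e.
  apply: le_trans (mindist_ge0 Hn (x 1) XN0) _.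
  by apply: CR_ub => //; apply: HX; exact: (xXN g (k:=1) isT).
have c0 : (1 <= n)%N -> 0 < c.
  move=> n1.
  have [z zXN zn] : exists2 z, z \in XN & z \notin pts x n.
    case: (pselect (exists2 z, z \in XN & z \notin pts x n)) => // H; exfalso.
    have : {subset XN <= pts x n}.
      by move=> z zX; apply/negPn/negP => zn; apply: H; exists z.
    move/(uniq_leq_size uXN); rewrite size_map size_iota sXN; lia.
  have [w wp Ew] := mindist_att Hn z (pts0 x n1).
  apply: lt_le_trans (CR_ub Hn cX (pts0 x n1) (HX _ zXN)); rewrite Ew.
  apply: nrm_gt0 => //; rewrite subr_eq0; apply/eqP => zw.
  by rewrite zw wp in zn.
have ac : (1 <= n)%N -> a * c <= hh nrm x n.
  move=> n1; have := CR_step Hn cX HX g n1; rewrite -/c -/e => h.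
  have -> : a * c = c - e by rewrite /a; field; rewrite gt_eqF // c0.
  by rewrite lerBlDl.
have des0 : [set CR nrm X Z | Z in designs X n] !=set0 /\
             [set SR nrm Z | Z in designs X n] !=set0.
  pose f0 := fun i : 'I_n => nth 0 XN i.
  have D : designs X n (range f0).
    exists f0 => //; split.
      move=> i j /eqP; rewrite /f0 nth_uniq ?sXN //; [by move/eqP/val_inj|have := ltn_ord i; lia|have := ltn_ord j; lia].
    by move=> i; apply: HX; rewrite /f0 mem_nth // sXN; have := ltn_ord i; lia.
  by split; [exists (CR nrm X (range f0)) | exists (SR nrm (range f0))]; exists (range f0).
have rangeE : forall f : 'I_n -> 'rV[R]_d, range f = [set` map f (enum 'I_n)].
  move=> f; apply/seteqP; split => y /=.
    by move=> [i _ <-]; apply: map_f; rewrite mem_enum.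
  by move=> /mapP [i _ ->]; exists i.
have Z0 : (1 <= n)%N -> forall f : 'I_n -> 'rV[R]_d, map f (enum 'I_n) != [::].
  by move=> n1 f; rewrite -size_eq0 size_map size_enum_ord; lia.
have H1 : (1 <= n)%N -> c <= 2 / a * CRstar nrm X n.
  move=> n1.
  have lb : a * c / 2 <= CRstar nrm X n.
    apply: lb_le_inf; first by case: des0.
    move=> r [Z [f [finj fX] <-] <-]; rewrite rangeE.
    have /choice [gg Hg] : forall k, exists i : 'I_n,
        mindist nrm (x k) [set` map f (enum 'I_n)] = nrm (x k - f i).
      move=> k; have [z /mapP [i _ ->] Ez] := mindist_att Hn (x k) (Z0 n1 f).
      by exists i.
    have [i [j [Hi Hj ij Eg]]] : exists i j, [/\ (1 <= i <= n.+1)%N,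
        (1 <= j <= n.+1)%N, i != j & gg i = gg j].
      case: (pselect (exists i j, [/\ (1 <= i <= n.+1)%N,
        (1 <= j <= n.+1)%N, i != j & gg i = gg j])) => // H; exfalso.
      have inj : {in iota 1 n.+1 &, injective gg}.
        move=> i j; rewrite !mem_iota => Hi Hj Eg; apply/eqP; apply/negPn/negP => ij.
        by apply: H; exists i, j; split => //; lia.
      have := @uniq_leq_size _ (map gg (iota 1 n.+1)) (enum 'I_n).
      rewrite map_inj_in_uniq // iota_uniq size_map size_iota size_enum_ord.
      by move=> /(_ isT (fun y _ => mem_enum _ y)); lia.
    rewrite ler_pdivrMr //.
    apply: le_trans (ac n1) _.
    apply: le_trans (pair_sep Hn g n1 Hi Hj ij) _.
    apply: le_trans (nrm_tri Hn _ (f (gg i)) _) _.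
    rewrite mulr_natr mulr2n; apply: lerD.
      rewrite -Hg; apply: CR_ub => //; [exact: Z0 | apply: HX; apply: (xXN g); lia].
    rewrite Eg nrmB // -Hg; apply: CR_ub => //; [exact: Z0 | apply: HX; apply: (xXN g); lia].
  have -> : c = 2 / a * (a * c / 2) by field; rewrite gt_eqF.
  apply: ler_wpM2l => //; apply: divr_ge0 => //; exact: ltW.
have H23 : (2 <= n)%N -> a / 2 * SRstar nrm X n <= SR nrm [set` pts x n] /\
                         a * c / 2 <= SR nrm [set` pts x n].
  move=> n2; have n1 : (1 <= n)%N by lia.
  pose m := n.-1; have nE : n = m.+1 by rewrite /m; lia.
  have m1 : (1 <= m)%N by rewrite /m; lia.
  have mn : (m <= n)%N by rewrite nE.
  set c' := CR nrm X [set` pts x m].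
  have cc' : c <= c'.
    apply: CR_le (X0 HX g) _ => y Xy.
    apply: le_trans (mindist_mono Hn y (pts0 x m1) (pts_sub (x:=x) mn)) _.
    by apply: CR_ub => //; exact: pts0.
  have key : c' - e <= hh nrm x m.
    by have := CR_step Hn cX HX g m1; rewrite -/c' -/e lerBlDl.
  have ac' : a * c' <= c' - e.
    have -> : a * c' = c' - e * (c' / c) by rewrite /a; field; rewrite gt_eqF // c0.
    rewrite lerD2l lerN2 -{1}(mulr1 e); apply: ler_wpM2l => //.
    by rewrite ler_pdivlMr ?c0 // mul1r.
  have hpos : 0 < hh nrm x m.
    apply: lt_le_trans key; apply: lt_le_trans (lerB cc' (lexx e)).
    have -> : c - e = a * c by rewrite /a; field; rewrite gt_eqF // c0.
    by apply: mulr_gt0 => //; exact: c0.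
  have SRs : SRstar nrm X n <= c'.
    apply: ge_sup; first by case: des0.
    move=> r [Z [f [finj fX] <-] <-].
    have /choice [gg Hg] : forall i : 'I_n, exists k,
        (k \in iota 1 m) /\ mindist nrm (f i) [set` pts x m] = nrm (f i - x k).
      move=> i; have [z /mapP [k kin ->] Ez] := mindist_att Hn (f i) (pts0 x m1).
      by exists k.
    have [i [j [ij Eg]]] : exists i j : 'I_n, i != j /\ gg i = gg j.
      case: (pselect (exists i j : 'I_n, i != j /\ gg i = gg j)) => // H; exfalso.
      have inj : injective gg.
        move=> i j Eg; apply/eqP; apply/negPn/negP => ij.
        by apply: H; exists i, j.
      have := @uniq_leq_size _ (map gg (enum 'I_n)) (iota 1 m).
      rewrite map_inj_uniq // enum_uniq size_map size_iota size_enum_ord.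
      have sub : {subset map gg (enum 'I_n) <= iota 1 m}.
        by move=> y /mapP [k _ ->]; case: (Hg k).
      by move=> /(_ isT sub); rewrite nE; lia.
    rewrite /SR ler_pdivrMr //.
    apply: (@le_trans _ _ (nrm (f i - f j))).
      apply: ge_inf; first by exists 0 => q [p [q' [_ _ _ ->]]]; exact: (nrm_ge0 Hn).
      exists (f i), (f j); split; [by exists i|by exists j| |by []].
      by move=> /finj /eqP; rewrite (negbTE ij).
    apply: le_trans (nrm_tri Hn _ (x (gg i)) _) _.
    rewrite mulr_natr mulr2n; apply: lerD.
      by case: (Hg i) => _ <-; apply: CR_ub => //; exact: pts0.
    rewrite Eg nrmB //; case: (Hg j) => _ <-; apply: CR_ub => //; exact: pts0.
  have SRlb : hh nrm x m / 2 <= SR nrm [set` pts x n].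
    rewrite /SR; apply: ler_wpM2r; first by rewrite invr_ge0.
    have b1 : (1 <= 1 <= n)%N by rewrite nE.
    have b2 : (1 <= 2 <= n)%N by rewrite nE /= ltnS m1.
    apply: lb_le_inf.
      have p12 : hh nrm x m <= nrm (x 1 - x 2).
        by apply: (pair_sep Hn g m1); rewrite -?nE.
      exists (nrm (x 1 - x 2)), (x 1), (x 2); split.
      - exact: (mem_pts x b1).
      - exact: (mem_pts x b2).
      - move=> e12; move: p12; rewrite e12 subrr (nrm0 Hn).
        by rewrite leNgt hpos.
      - by [].
    move=> r [p [q [/mapP [i /iota_bd iin ->] /mapP [j /iota_bd jin ->] pq ->]]].
    apply: (pair_sep Hn g m1); rewrite -?nE //.
    by apply/eqP => ij; apply: pq; rewrite ij.
  split.
    apply: le_trans SRlb.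
    apply: (@le_trans _ _ (a / 2 * c')).
      apply: ler_wpM2l => //; apply: divr_ge0 => //; exact: ltW.
    rewrite mulrAC; apply: ler_wpM2r; first by rewrite invr_ge0.
    apply: le_trans key; exact: ac'.
  apply: le_trans SRlb; apply: ler_wpM2r; first by rewrite invr_ge0.
  exact: le_trans (ac n1) (h_mono Hn g m1 mn).
split.
- exact: H1.
- by move=> n2; case: (H23 n2).
- move=> n2; have [_ lb] := H23 n2; have n1 : (1 <= n)%N by apply: ltnW.
  have s0 : 0 < SR nrm [set` pts x n].
    apply: lt_le_trans lb; apply: divr_gt0 => //; apply: mulr_gt0 => //; exact: c0 n1.
  rewrite /MR ler_pdivrMr // -/c.
  rewrite {1}(_ : c = 2 / a * (a * c / 2)); last by field; rewrite gt_eqF.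
  apply: ler_wpM2l => //; apply: divr_ge0 => //; exact: ltW.
Qed.
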